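(* Let $U$ be an $n$-qubit unitary and $M^U$ the representation matrix of the channel $\rho\mapsto U\rho U^\dagger$. Then: (1) for $0<p<2$ and $0<q\le\infty$, $\|M^U\|_{p,q}\ge1$, with equality if and only if $U$ is a Clifford unitary; (2) for $p>2$ and $0<q<\infty$, $\|M^U\|_{p,q}\le1$, with equality if and only if $U$ is a Clifford unitary; (3) for $p=2$ and any $q>0$ (including $q=\infty$), and for $p>2$ and $q=\infty$, $\|M^U\|_{p,q}=1$.
   Context: Pauli notation: $P_{\vec z}=P_{z_1}\otimes\cdots\otimes P_{z_n}$ for $\vec z\in\{0,1,2,3\}^n$, $P_0=\mathbb I,P_1=X,P_2=Y,P_3=Z$. Representation matrix: $M^\Phi_{\vec z\vec x}=2^{-n}\mathrm{Tr}(P_{\vec z}\Phi(P_{\vec x}))$. A Clifford unitary is a unitary $U$ such that $UP_{\vec x}U^\dagger$ is, up to a phase, a Pauli operator for every $\vec x$. Group norm: $\|M\|_{p,q}=(\frac1{N_1}\sum_i\|M_i\|_p^q)^{1/q}$ for an $N_1\times N_2$ matrix with rows $M_i$ ($\max_i\|M_i\|_p$ if $q=\infty$); $\|\cdot\|_p$ for $0<p<1$ is the usual $(\sum|\cdot|^p)^{1/p}$ quasi-norm. *)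

(* Defs.v *)
From mathcomp Require Import all_boot all_order all_algebra.
From mathcomp Require Import reals constructive_ereal exp complex.
Set Implicit Arguments. Unset Strict Implicit. Unset Printing Implicit Defensive.
Import Order.TTheory GRing.Theory Num.Theory.
Local Open Scope ring_scope.

Section Pauli.
Variable R : realType.
Local Notation C := (R[i]).

(* single-qubit Pauli matrices P_0 = I, P_1 = X, P_2 = Y, P_3 = Z;
   entry (a, b) with a, b : bool the row / column basis state *)
Definition pauli1 (s : 'I_4) (a b : bool) : C :=
  match val s with
  | 0 => if a == b then 1 else 0
  | 1 => if a == b then 0 else 1
  | 2 => if a == b then 0 else if a then 'i%C else - 'i%C
  | _ => if a == b then (if a then -1 else 1) else 0
  end.

Definition qbit (k i : nat) : bool := odd (i %/ 2 ^ k).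

(* Pauli string P_z = P_{z_1} (x) ... (x) P_{z_n}, written entrywise:
   the Kronecker product has entries prod_k (P_{z_k})_{a_k b_k}. *)
Definition pauli (n : nat) (z : {ffun 'I_n -> 'I_4}) : 'M[C]_(2 ^ n) :=
  \matrix_(a, b) \prod_(k < n) pauli1 (z k) (qbit k a) (qbit k b).

Definition adj (m : nat) (A : 'M[C]_m) : 'M[C]_m := (map_mx Num.conj A)^T.

Definition unitary (m : nat) (U : 'M[C]_m) : Prop := U *m adj U = 1%:M.

Definition clifford (n : nat) (U : 'M[C]_(2 ^ n)) : Prop :=
  forall x : {ffun 'I_n -> 'I_4}, exists (c : C) (y : {ffun 'I_n -> 'I_4}),
    `|c| = 1 /\ U *m pauli x *m adj U = c *: pauli y.

Definition repr_mat (n : nat) (U : 'M[C]_(2 ^ n))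
  (z x : {ffun 'I_n -> 'I_4}) : C :=
  (2 ^ n)%:R^-1 * \tr (pauli z *m (U *m pauli x *m adj U)).

Definition cabs (c : C) : R := complex.Re `|c|.

Definition groupnorm (n : nat) (p : R) (q : \bar R)
  (M : {ffun 'I_n -> 'I_4} -> {ffun 'I_n -> 'I_4} -> C) : R :=
  match q with
  | +oo%E => \big[Num.max/0]_(z : {ffun 'I_n -> 'I_4})
               (\sum_(x : {ffun 'I_n -> 'I_4}) cabs (M z x) `^ p) `^ p^-1
  | (q'%:E)%E => ((4 ^ n)%:R^-1 * \sum_(z : {ffun 'I_n -> 'I_4})
               ((\sum_(x : {ffun 'I_n -> 'I_4}) cabs (M z x) `^ p) `^ p^-1) `^ q')
               `^ q'^-1
  | -oo%E => 0
  end.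

End Pauli.

(* Main.v *)
Require Import Defs.
From mathcomp Require Import all_boot all_order all_algebra.
From mathcomp Require Import reals constructive_ereal exp complex.
From mathcomp Require Import zify ring lra.
Set Implicit Arguments. Unset Strict Implicit. Unset Printing Implicit Defensive.
Import Order.TTheory GRing.Theory Num.Theory.
Local Open Scope ring_scope.

Lemma qbit0 m : qbit 0 m = odd m.
Proof. by rewrite /qbit expn0 divn1. Qed.

Lemma qbitS k m : qbit k.+1 m = qbit k m./2.
Proof. by rewrite /qbit expnS divnMA divn2. Qed.

Lemma qbit_inj n a b : (a < 2 ^ n)%N -> (b < 2 ^ n)%N ->
  (forall k, (k < n)%N -> qbit k a = qbit k b) -> a = b.
Proof.
elim: n a b => [|n IH] a b.
  by rewrite expn0 !ltnS !leqn0 => /eqP -> /eqP ->.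
move=> Ha Hb H.
have e0 := H 0%N (ltn0Sn _); rewrite !qbit0 in e0.
have eh : a./2 = b./2.
  apply: IH.
  - by rewrite -divn2 ltn_divLR // mulnC -expnS.
  - by rewrite -divn2 ltn_divLR // mulnC -expnS.
  by move=> k Hk; rewrite -!qbitS; apply: H.
by rewrite -[a]odd_double_half -[b]odd_double_half e0 eh.
Qed.

Section S.
Variable C : comPzRingType.

Lemma sum_double m (h : nat -> C) :
  \sum_(i < (2 * m)%N) h i = \sum_(i < m) (h i.*2 + h i.*2.+1).
Proof.
elim: m => [|m IH]; first by rewrite muln0 !big_ord0.
rewrite mulnS !big_ord_recr /= IH addrA.
congr (_ + _ + _). all: try (f_equal; lia).
Qed.

Lemma qbit_dbl0 a : qbit 0 a.*2 = false.
Proof. by rewrite qbit0 odd_double. Qed.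
Lemma qbit_dbl1 a : qbit 0 a.*2.+1 = true.
Proof. by rewrite qbit0 /= odd_double. Qed.
Lemma qbitS_dbl k a : qbit k.+1 a.*2 = qbit k a.
Proof. by rewrite qbitS doubleK. Qed.
Lemma qbitS_dbl1 k a : qbit k.+1 a.*2.+1 = qbit k a.
Proof. by rewrite qbitS -[a.*2.+1]/(true + a.*2)%N half_bit_double. Qed.

Lemma sum_bits n (f : 'I_n -> bool -> C) :
  \sum_(a < 2 ^ n) \prod_(k < n) f k (qbit k a) = \prod_(k < n) (f k false + f k true).
Proof.
elim: n f => [|n IH] f.
  by rewrite expn0 big_ord1 !big_ord0.
rewrite expnS (sum_double _ (fun a => \prod_(k < n.+1) f k (qbit k a))).
rewrite big_ord_recl -(IH (fun k => f (lift ord0 k))) mulr_sumr.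
apply: eq_bigr => a _.
rewrite !big_ord_recl /= qbit_dbl0 qbit_dbl1 mulrDl.
congr (_ * _ + _ * _); apply: eq_bigr => k _.
  by rewrite /bump /= add1n qbitS_dbl.
by rewrite /bump /= add1n qbitS_dbl1.
Qed.
End S.

Section P.
Variable R : realType.
Local Notation C := (R[i]).

Lemma iMi : 'i%C * 'i%C = -1 :> C.
Proof. by rewrite -expr2 sqr_i. Qed.

Lemma pauli1_comp (a b c d : bool) :
  \sum_(s < 4) pauli1 R s c d * pauli1 R s a b =
  if (c == b) && (d == a) then 2 else 0.
Proof.
rewrite !big_ord_recl big_ord0 /pauli1 /=.
case: a; case: b; case: c; case: d => /=;
 rewrite ?mulr0 ?mul0r ?mulr1 ?mul1r ?mulrN ?mulNr ?opprK ?iMi ?addr0 ?add0r ?opprK //. all: ring.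
Qed.

Lemma pauli1_orth (s t : 'I_4) :
  (pauli1 R s false false * pauli1 R t false false + pauli1 R s false true * pauli1 R t true false) +
  (pauli1 R s true false * pauli1 R t false true + pauli1 R s true true * pauli1 R t true true)
  = if s == t then 2 else 0.
Proof.
case: s => [[|[|[|[|s]]]] Hs] //; case: t => [[|[|[|[|t]]]] Ht] //;
 rewrite /pauli1 /=;
 rewrite ?mulr0 ?mul0r ?mulr1 ?mul1r ?mulrN ?mulNr ?opprK ?iMi ?addr0 ?add0r ?opprK //.
all: try ring.
Qed.

Lemma pauli1_herm (s : 'I_4) a b : Num.conj (pauli1 R s b a) = pauli1 R s a b.
Proof.
case: s => [[|[|[|[|s]]]] Hs] //; case: a; case: b; rewrite /pauli1 /=.
all: rewrite ?conjC0 ?conjC1 ?rmorphN ?conjC1 ?opprK //.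
all: apply/eqP; rewrite eq_complex /= ?oppr0 ?opprK ?eqxx //.
Qed.
End P.

Section RA.
Variable R : realType.

Lemma pow2E (r : R) : 0 <= r -> r `^ 2 = r ^+ 2.
Proof. by move=> r0; rewrite -powR_mulrn. Qed.

Lemma pw_le (r p : R) : 0 <= r <= 1 -> 0 < p -> p <= 2 -> r ^+ 2 <= r `^ p.
Proof.
move=> /andP[r0 r1] p0 p2; rewrite -pow2E //.
have [->|rp] := eqVneq r 0; first by rewrite !powR0 ?(gt_eqF p0) ?(gt_eqF (ltr0Sn _ 1)) //.
by apply: ger_powR => //; rewrite lt_neqAle eq_sym rp r0 r1.
Qed.

Lemma pw_ge (r p : R) : 0 <= r <= 1 -> 0 < p -> 2 <= p -> r `^ p <= r ^+ 2.
Proof.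
move=> /andP[r0 r1] p0 p2; rewrite -pow2E //.
have [->|rp] := eqVneq r 0; first by rewrite !powR0 ?(gt_eqF p0) ?(gt_eqF (ltr0Sn _ 1)) //.
by apply: ger_powR => //; rewrite lt_neqAle eq_sym rp r0 r1.
Qed.

Lemma pw_flat (r p : R) : 0 < p -> (r = 0 \/ r = 1) -> r `^ p = r ^+ 2.
Proof.
by move=> p0 [->|->]; rewrite ?powR0 ?gt_eqF // ?expr0n ?powR1 ?expr1n.
Qed.

Lemma pw_eq (r p : R) : 0 <= r -> p != 2 -> r `^ p = r ^+ 2 -> r = 0 \/ r = 1.
Proof.
move=> r0 p2; rewrite -pow2E //.
have [->|rp] := eqVneq r 0; first by left.
have rpos : 0 < r by rewrite lt_neqAle eq_sym rp.
rewrite /powR (negbTE rp) => /expR_inj /eqP.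
rewrite -subr_eq0 -mulrBl mulf_eq0 subr_eq0 (negbTE p2) /= ln_eq0 //.
by move=> /eqP; right.
Qed.

Variable I : finType.

Lemma le1_of_sum (r : I -> R) : (forall i, 0 <= r i) ->
  \sum_i r i ^+ 2 = 1 -> forall i, r i <= 1.
Proof.
move=> r0 S i; rewrite -(expr_le1 (n:=2)) // -S (bigD1 i) //= lerDl.
by apply: sumr_ge0 => j _; rewrite exprn_ge0.
Qed.

Lemma rowsum_le (r : I -> R) p : (forall i, 0 <= r i) -> \sum_i r i ^+ 2 = 1 ->
  0 < p -> p <= 2 -> 1 <= \sum_i r i `^ p.
Proof.
move=> r0 S p0 p2; rewrite -S; apply: ler_sum => i _; apply: pw_le => //.
by rewrite r0 le1_of_sum.
Qed.

Lemma rowsum_ge (r : I -> R) p : (forall i, 0 <= r i) -> \sum_i r i ^+ 2 = 1 ->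
  0 < p -> 2 <= p -> \sum_i r i `^ p <= 1.
Proof.
move=> r0 S p0 p2; rewrite -S; apply: ler_sum => i _; apply: pw_ge => //.
by rewrite r0 le1_of_sum.
Qed.

Lemma rowsum_flat (r : I -> R) p : 0 < p -> \sum_i r i ^+ 2 = 1 ->
  (forall i, r i = 0 \/ r i = 1) -> \sum_i r i `^ p = 1.
Proof.
by move=> p0 S F; rewrite -S; apply: eq_bigr => i _; apply: pw_flat.
Qed.

Lemma rowsum_eq (r : I -> R) p : (forall i, 0 <= r i) -> \sum_i r i ^+ 2 = 1 ->
  0 < p -> p != 2 -> \sum_i r i `^ p = 1 -> forall i, r i = 0 \/ r i = 1.
Proof.
move=> r0 S p0 p2 E i; apply: (pw_eq (p := p)) => //.
have ri1 j : 0 <= r j <= 1 by rewrite r0 le1_of_sum.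
have [pl|pg] := ltP p 2.
  have : \sum_j (r j `^ p - r j ^+ 2) = 0 by rewrite sumrB E S subrr.
  move/psumr_eq0P => H; apply/eqP; rewrite -subr_eq0; apply/eqP; apply: H => //.
  by move=> j _; rewrite subr_ge0 pw_le // ltW.
have : \sum_j (r j ^+ 2 - r j `^ p) = 0 by rewrite sumrB E S subrr.
move/psumr_eq0P => H; apply/eqP; rewrite eq_sym -subr_eq0; apply/eqP; apply: H => //.
by move=> j _; rewrite subr_ge0 pw_ge.
Qed.

Lemma root_ge1 (S p : R) : 0 < p -> 1 <= S -> 1 <= S `^ p^-1.
Proof.
move=> p0 S1.
have h : 1 `^ p^-1 <= S `^ p^-1.
  by apply: ge0_ler_powR; rewrite ?nnegrE ?invr_ge0 //; lra.
by rewrite powR1 in h.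
Qed.

Lemma root_le1 (S p : R) : 0 < p -> 0 <= S -> S <= 1 -> S `^ p^-1 <= 1.
Proof.
move=> p0 S0 S1.
have h : S `^ p^-1 <= 1 `^ p^-1.
  by apply: ge0_ler_powR; rewrite ?nnegrE ?invr_ge0 //; lra.
by rewrite powR1 in h.
Qed.

Lemma root_eq1 (S p : R) : 0 < p -> 0 <= S -> (S `^ p^-1 = 1 <-> S = 1).
Proof.
move=> p0 S0; split; last by move->; rewrite powR1.
move/eqP; rewrite powR_eq1 => /or3P [/eqP // | | ]; [lra | rewrite invr_eq0 => /eqP; lra].
Qed.

Lemma mean_ge (f : I -> R) : (0 < #|I|)%N -> (forall i, 1 <= f i) ->
  1 <= (#|I|%:R)^-1 * \sum_i f i /\
  ((#|I|%:R)^-1 * \sum_i f i = 1 <-> forall i, f i = 1).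
Proof.
move=> I0 f1.
have N0 : 0 < (#|I|%:R : R) by rewrite ltr0n.
have E : \sum_i f i = \sum_i (f i - 1) + #|I|%:R.
  by rewrite sumrB sumr_const subrK.
have D0 : 0 <= \sum_i (f i - 1) by apply: sumr_ge0 => i _; rewrite subr_ge0.
split.
  by rewrite E mulrDr mulVf ?gt_eqF // lerDr mulr_ge0 // invr_ge0 ltW.
split; last first.
  move=> H; rewrite E (eq_bigr (fun _ => 0)); first by rewrite big1 // add0r mulVf ?gt_eqF.
  by move=> i _; rewrite H subrr.
move=> H0.
have : (#|I|%:R)^-1 * \sum_i (f i - 1) = 0 :> R.
  by move: H0; rewrite E mulrDr mulVf ?gt_eqF //; lra.
move/eqP; rewrite mulf_eq0 invr_eq0 gt_eqF //=.
move=> /eqP/psumr_eq0P H i; apply/eqP; rewrite -subr_eq0; apply/eqP; apply: H => //.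
by move=> j _; rewrite subr_ge0.
Qed.

Lemma mean_le (f : I -> R) : (0 < #|I|)%N -> (forall i, f i <= 1) ->
  (#|I|%:R)^-1 * \sum_i f i <= 1 /\
  ((#|I|%:R)^-1 * \sum_i f i = 1 <-> forall i, f i = 1).
Proof.
move=> I0 f1.
have [H1 H2] := mean_ge (f := fun i => 2 - f i) I0 (fun i => ltac:(by rewrite lerBrDr -lerBrDl; have := f1 i; lra)).
have N0 : (#|I|%:R : R) != 0 by rewrite pnatr_eq0 -lt0n.
have E : (#|I|%:R)^-1 * \sum_i (2 - f i) = 2 - (#|I|%:R)^-1 * \sum_i f i :> R.
  by rewrite sumrB sumr_const mulrBr -[2 *+ _]mulr_natl mulrA mulVf ?mul1r.
rewrite E in H1 H2; split; first by lra.
split => [H i|H].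
  have : 2 - f i = 1 by apply H2; lra.
  lra.
suff: 2 - (#|I|%:R)^-1 * \sum_i f i = 1 by lra.
by apply H2 => i; rewrite H; lra.
Qed.
End RA.

Section Mat.
Variable R : realType.
Local Notation C := (R[i]).
Variable n : nat.
Local Notation T := {ffun 'I_n -> 'I_4}.

Lemma forall_qbit (a b : 'I_(2 ^ n)) :
  [forall k : 'I_n, qbit k a == qbit k b] = (a == b).
Proof.
apply/forallP/eqP => [H|-> //]; apply/val_inj.
by apply: (qbit_inj (ltn_ord a) (ltn_ord b)) => k Hk; apply/eqP: (H (Ordinal Hk)).
Qed.

Lemma forall_andb (P Q : 'I_n -> bool) :
  [forall k, P k && Q k] = [forall k, P k] && [forall k, Q k].
Proof.
apply/forallP/andP => [H|[/forallP H1 /forallP H2] k]; last by rewrite H1 H2.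
by split; apply/forallP => k; case/andP: (H k).
Qed.

Lemma prod_if (x : C) (P : 'I_n -> bool) :
  \prod_(k < n) (if P k then x else 0) = if [forall k, P k] then x ^+ n else 0.
Proof.
case: (boolP [forall k, P k]) => [/forallP H | /forallPn [k Hk]].
  rewrite (eq_bigr (fun _ => x)) ?prodr_const ?card_ord // => k _.
  by rewrite H.
by rewrite (bigD1 k) //= (negbTE Hk) mul0r.
Qed.

Lemma pauli_sum (a b c d : 'I_(2 ^ n)) :
  \sum_(z : T) pauli R z c d * pauli R z a b =
  if (c == b) && (d == a) then (2 ^ n)%:R else 0.
Proof.
transitivity (\prod_(k < n) \sum_(s < 4)
   (pauli1 R s (qbit k c) (qbit k d) * pauli1 R s (qbit k a) (qbit k b))).
  rewrite bigA_distr_bigA; apply: eq_bigr => z _.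
  by rewrite !mxE -big_split.
under eq_bigr do rewrite pauli1_comp.
by rewrite prod_if forall_andb !forall_qbit natrX.
Qed.

Lemma ffun_eqE (z y : T) : [forall k, z k == y k] = (z == y).
Proof.
by apply/forallP/eqP => [H|-> //]; apply/ffunP => k; apply/eqP.
Qed.

Lemma trace_orth (z y : T) :
  \tr (pauli R z *m pauli R y) = if z == y then (2 ^ n)%:R else 0.
Proof.
rewrite /mxtrace.
under eq_bigr => i _ do rewrite mxE; under eq_bigr do rewrite ?mxE.
transitivity (\sum_(i < 2 ^ n) \sum_(j < 2 ^ n) \prod_(k < n)
  (pauli1 R (z k) (qbit k i) (qbit k j) * pauli1 R (y k) (qbit k j) (qbit k i))).
  by apply: eq_bigr => i _; apply: eq_bigr => j _; rewrite !mxE -big_split.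
under eq_bigr => i _ do rewrite (sum_bits (fun k b => pauli1 R (z k) (qbit k i) b * pauli1 R (y k) b (qbit k i))).
rewrite (sum_bits (fun k a => pauli1 R (z k) a false * pauli1 R (y k) false a
   + pauli1 R (z k) a true * pauli1 R (y k) true a)).
under eq_bigr do rewrite pauli1_orth.
by rewrite prod_if ffun_eqE natrX.
Qed.

Lemma pauli_herm (z : T) : adj (pauli R z) = pauli R z.
Proof.
apply/matrixP => a b; rewrite !mxE rmorph_prod; apply: eq_bigr => k _.
exact: pauli1_herm.
Qed.

Definition z0 : T := [ffun => ord0].

Lemma pauli0 : pauli R z0 = 1%:M.
Proof.
apply/matrixP => a b; rewrite !mxE.
under eq_bigr do rewrite ffunE /pauli1 /=.
by rewrite prod_if forall_qbit expr1n; case: (a == b).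
Qed.

Lemma pauli_complete (A : 'M[C]_(2 ^ n)) :
  A = \sum_(z : T) ((2 ^ n)%:R^-1 * \tr (pauli R z *m A)) *: pauli R z.
Proof.
apply/matrixP => a b; rewrite summxE.
under eq_bigr do rewrite mxE.
transitivity ((2 ^ n)%:R^-1 * \sum_(c < 2 ^ n) \sum_(d < 2 ^ n)
   (A d c * \sum_(z : T) pauli R z c d * pauli R z a b)); last first.
  symmetry; under eq_bigr do rewrite -mulrA.
  rewrite -mulr_sumr; congr (_ * _).
  transitivity (\sum_(z : T) \sum_(c < 2 ^ n) \sum_(d < 2 ^ n)
     A d c * (pauli R z c d * pauli R z a b)).
    apply: eq_bigr => z _; rewrite /mxtrace mulr_suml; apply: eq_bigr => c _.
    rewrite mxE mulr_suml; apply: eq_bigr => d _.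
    by rewrite mulrA [A d c * _]mulrC.
  rewrite exchange_big; apply: eq_bigr => c _; rewrite exchange_big.
  by apply: eq_bigr => d _; rewrite mulr_sumr.
under eq_bigr do under eq_bigr do rewrite pauli_sum.
rewrite (bigD1 b) //= (bigD1 a) //= !eqxx /=.
rewrite [X in _ + X + _]big1; last by move=> d /negbTE ->; rewrite mulr0.
rewrite [X in _ + X]big1; last first.
  by move=> c /negbTE Hc; rewrite big1 // => d _; rewrite Hc mulr0.
by rewrite !addr0 mulrC mulfK // pnatr_eq0 expn_eq0.
Qed.

Lemma adjK m (A : 'M[C]_m) : adj (adj A) = A.
Proof. by apply/matrixP => i j; rewrite !mxE conjCK. Qed.

Lemma adjM m (A B : 'M[C]_m) : adj (A *m B) = adj B *m adj A.
Proof.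
apply/matrixP => i j; rewrite !mxE rmorph_sum; apply: eq_bigr => k _.
by rewrite !mxE rmorphM mulrC.
Qed.

Lemma adj_sumZ (c : T -> C) (P : T -> 'M[C]_(2 ^ n)) :
  adj (\sum_z c z *: P z) = \sum_z Num.conj (c z) *: adj (P z).
Proof.
apply/matrixP => i j; rewrite !mxE !summxE rmorph_sum; apply: eq_bigr => z _.
by rewrite !mxE rmorphM.
Qed.

Lemma N0 : (2 ^ n)%:R != 0 :> C.
Proof. by rewrite pnatr_eq0 expn_eq0. Qed.

Lemma col_norm (U : 'M[C]_(2 ^ n)) x : unitary U ->
  \sum_(z : T) repr_mat U z x * Num.conj (repr_mat U z x) = 1.
Proof.
move=> HU; have HU' : adj U *m U = 1%:M by apply: mulmx1C.
set B := U *m pauli R x *m adj U.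
have HB : B = \sum_(z : T) repr_mat U z x *: pauli R z by exact: pauli_complete.
have E1 : \tr (B *m adj B) = (2 ^ n)%:R.
  rewrite /B !adjM adjK pauli_herm !mulmxA mxtrace_mulC !mulmxA HU' mul1mx.
  by rewrite -[pauli R x *m adj U *m U]mulmxA HU' mulmx1 trace_orth eqxx.
have E2 : \tr (B *m adj B) =
    (2 ^ n)%:R * \sum_(z : T) repr_mat U z x * Num.conj (repr_mat U z x).
  rewrite HB adj_sumZ mulmx_suml raddf_sum mulr_sumr; apply: eq_bigr => z _.
  rewrite mulmx_sumr raddf_sum (bigD1 z) //= big1; last first.
    move=> w /negbTE Hw; rewrite pauli_herm -scalemxAl -scalemxAr !mxtraceZ.
    by rewrite trace_orth eq_sym Hw !mulr0.
  rewrite pauli_herm -scalemxAl -scalemxAr !mxtraceZ trace_orth eqxx addr0.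
  by rewrite mulrA mulrC.
by apply: (mulfI N0); rewrite -E2 E1 mulr1.
Qed.

Lemma repr_adj (U : 'M[C]_(2 ^ n)) z x : repr_mat U z x = repr_mat (adj U) x z.
Proof.
rewrite /repr_mat adjK; congr (_ * _).
rewrite !mulmxA mxtrace_mulC !mulmxA mxtrace_mulC !mulmxA.
by rewrite mxtrace_mulC !mulmxA.
Qed.

Lemma unitary_adj (U : 'M[C]_(2 ^ n)) : unitary U -> unitary (adj U).
Proof. by move=> HU; rewrite /unitary adjK; apply: mulmx1C. Qed.

Local Open Scope complex_scope.
Lemma normC_cabs (c : C) : `|c| = (cabs c)%:C.
Proof. by rewrite /cabs normc_def. Qed.

Lemma cabs_ge0 (c : C) : 0 <= cabs c.
Proof. by have := normr_ge0 c; rewrite normC_cabs lecE => /andP[_]. Qed.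

Lemma cabs_sq (c : C) : ((cabs c) ^+ 2)%:C = c * Num.conj c.
Proof. by rewrite -sqr_normc normC_cabs rmorphXn. Qed.

Lemma cabs_eq0 (c : C) : cabs c = 0 -> c = 0.
Proof. by move=> H; apply/eqP; rewrite -normr_eq0 normC_cabs H. Qed.

Lemma cabs0 : cabs (0 : C) = 0.
Proof. by rewrite /cabs normr0. Qed.

Lemma cabs1 (c : C) : `|c| = 1 -> cabs c = 1.
Proof. by rewrite normC_cabs => -[]. Qed.

Lemma cabs1' (c : C) : cabs c = 1 -> `|c| = 1.
Proof. by rewrite normC_cabs => ->. Qed.

Lemma sumC (I : finType) (f : I -> R) : (\sum_i f i)%:C = \sum_i (f i)%:C.
Proof. by rewrite rmorph_sum. Qed.

Lemma col_norm_R (U : 'M[C]_(2 ^ n)) x : unitary U ->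
  \sum_(z : T) cabs (repr_mat U z x) ^+ 2 = 1.
Proof.
move=> HU; apply: complexI; rewrite sumC.
under eq_bigr do rewrite cabs_sq.
by rewrite col_norm.
Qed.

Lemma row_norm_R (U : 'M[C]_(2 ^ n)) z : unitary U ->
  \sum_(x : T) cabs (repr_mat U z x) ^+ 2 = 1.
Proof.
move=> HU; under eq_bigr do rewrite repr_adj.
by apply: col_norm_R; apply: unitary_adj.
Qed.

Lemma row0 (U : 'M[C]_(2 ^ n)) x : unitary U -> repr_mat U z0 x = (z0 == x)%:R.
Proof.
move=> HU; have HU' : adj U *m U = 1%:M by apply: mulmx1C.
rewrite /repr_mat pauli0 mul1mx mxtrace_mulC mulmxA HU' mul1mx.
rewrite -[pauli R x]mul1mx -pauli0 trace_orth.
by case: (z0 == x); rewrite ?mulr0 // mulVf // N0.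
Qed.

Definition flat (U : 'M[C]_(2 ^ n)) :=
  forall z x, cabs (repr_mat U z x) = 0 \/ cabs (repr_mat U z x) = 1.

Lemma clifford_flat (U : 'M[C]_(2 ^ n)) : clifford U -> flat U.
Proof.
move=> HC z x; have [c [y [Hc E]]] := HC x.
rewrite /repr_mat E -scalemxAr mxtraceZ trace_orth.
case: (z == y); last by rewrite mulr0 mulr0 cabs0; left.
by right; rewrite mulrCA mulVf ?N0 // mulr1; apply: cabs1.
Qed.

Lemma flat_clifford (U : 'M[C]_(2 ^ n)) : unitary U -> flat U -> clifford U.
Proof.
move=> HU HF x.
set r := fun z => cabs (repr_mat U z x).
have S : \sum_z r z ^+ 2 = 1 by apply: col_norm_R.
have [y Hy] : exists y, r y = 1.
  case: (boolP [exists y, r y != 0]) => [/existsP [y Hy]|/existsPn H].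
    by exists y; case: (HF y x) => // H; rewrite /r H eqxx in Hy.
  move: S; rewrite big1 => [|z _]; first by move/eqP; rewrite eq_sym oner_eq0.
  by have := H z; rewrite negbK => /eqP ->; rewrite expr0n.
have H0 : forall z, z != y -> r z = 0.
  move: S; rewrite (bigD1 y) //= Hy expr1n => /eqP; rewrite -subr_eq0 addrAC subrr add0r.
  move=> /eqP E z Hz.
  have := psumr_eq0P (fun i _ => exprn_ge0 2 (cabs_ge0 (repr_mat U i x))) E Hz.
  by move/eqP; rewrite expf_eq0 /= => /eqP.
exists (repr_mat U y x), y; split; first exact: cabs1'.
rewrite {1}(pauli_complete (U *m pauli R x *m adj U)) (bigD1 y) //= big1 ?addr0 //.
by move=> z Hz; rewrite -/(repr_mat U z x) (cabs_eq0 (H0 z Hz)) scale0r.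
Qed.
End Mat.

Section Abs.
Variable R : realType.
Local Notation C := (R[i]).
Variable n : nat.
Local Notation T := {ffun 'I_n -> 'I_4}.
Variable M : T -> T -> C.
Hypothesis Hrow : forall z, \sum_x cabs (M z x) ^+ 2 = 1.
Hypothesis Hr0 : forall x, cabs (M (z0 n) x) = 0 \/ cabs (M (z0 n) x) = 1.
Definition flatM := forall z x, cabs (M z x) = 0 \/ cabs (M z x) = 1.
Definition rho p z := (\sum_x cabs (M z x) `^ p) `^ p^-1.

Let Hge0 z x : 0 <= cabs (M z x). Proof. exact: cabs_ge0. Qed.

Lemma pow_ge1 (S e : R) : 0 < e -> 1 <= S -> 1 <= S `^ e.
Proof. by move=> e0 S1; rewrite -[e]invrK; apply: root_ge1; rewrite ?invr_gt0. Qed.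
Lemma pow_le1 (S e : R) : 0 < e -> 0 <= S -> S <= 1 -> S `^ e <= 1.
Proof. by move=> e0 S0 S1; rewrite -[e]invrK; apply: root_le1; rewrite ?invr_gt0. Qed.
Lemma pow_eq1 (S e : R) : 0 < e -> 0 <= S -> (S `^ e = 1 <-> S = 1).
Proof. by move=> e0 S0; rewrite -[e]invrK; apply: root_eq1; rewrite ?invr_gt0. Qed.

Lemma rho_ge0 p z : 0 <= rho p z.
Proof. exact: powR_ge0. Qed.

Lemma rho_ge1 p z : 0 < p -> p <= 2 -> 1 <= rho p z.
Proof. by move=> p0 p2; apply: root_ge1 => //; apply: rowsum_le. Qed.

Lemma rho_le1 p z : 0 < p -> 2 <= p -> rho p z <= 1.
Proof.
move=> p0 p2; apply: root_le1 => //; last exact: rowsum_ge.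
by apply: sumr_ge0 => x _; apply: powR_ge0.
Qed.

Lemma rho_eq1 p : 0 < p -> p != 2 -> (forall z, rho p z = 1) <-> flatM.
Proof.
move=> p0 p2; split => [H z|F z].
  apply: (rowsum_eq (r := fun x => cabs (M z x)) _ (Hrow z) p0 p2) => //.
  by apply/(root_eq1 p0); [apply: sumr_ge0 => x _; apply: powR_ge0 | exact: H].
apply/(root_eq1 p0); first by apply: sumr_ge0 => x _; apply: powR_ge0.
exact: rowsum_flat.
Qed.

Lemma rho_z0 p : 0 < p -> rho p (z0 n) = 1.
Proof.
move=> p0; apply/(root_eq1 p0); first by apply: sumr_ge0 => x _; apply: powR_ge0.
exact: rowsum_flat.
Qed.

Lemma rho2 z : rho 2 z = 1.
Proof. by apply/le_anti; rewrite rho_ge1 ?rho_le1. Qed.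

Lemma cardT : #|T| = (4 ^ n)%N.
Proof. by rewrite card_ffun !card_ord. Qed.

Definition Gfin p q := ((4 ^ n)%:R^-1 * \sum_z rho p z `^ q) `^ q^-1.
Definition Gmax p := \big[Num.max/0]_z rho p z.

Lemma I0 : (0 < #|T|)%N.
Proof. by rewrite cardT expn_gt0. Qed.

Lemma gn_mean_ge p q : 0 < q -> (forall z, 1 <= rho p z) ->
  1 <= Gfin p q /\ (Gfin p q = 1 <-> forall z, rho p z = 1).
Proof.
move=> q0 H.
have f1 z : 1 <= rho p z `^ q by apply: pow_ge1.
have [m1 meq] := mean_ge I0 f1; rewrite cardT in m1 meq.
have iq0 : 0 < q^-1 by rewrite invr_gt0.
split; first exact: pow_ge1.
rewrite /Gfin (pow_eq1 iq0) ?(le_trans ler01) // meq.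
split=> K z; last by rewrite K powR1.
by apply/(pow_eq1 q0); [exact: rho_ge0 | exact: K].
Qed.

Lemma gn_mean_le p q : 0 < q -> (forall z, rho p z <= 1) ->
  Gfin p q <= 1 /\ (Gfin p q = 1 <-> forall z, rho p z = 1).
Proof.
move=> q0 H.
have f1 z : rho p z `^ q <= 1 by apply: pow_le1 => //; exact: rho_ge0.
have [m1 meq] := mean_le I0 f1; rewrite cardT in m1 meq.
have iq0 : 0 < q^-1 by rewrite invr_gt0.
have a0 : 0 <= (4 ^ n)%:R^-1 * \sum_z rho p z `^ q.
  by rewrite mulr_ge0 // ?invr_ge0 ?ler0n // sumr_ge0 // => z _; apply: powR_ge0.
split; first exact: pow_le1.
rewrite /Gfin (pow_eq1 iq0) // meq.
split=> K z; last by rewrite K powR1.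
by apply/(pow_eq1 q0); [exact: rho_ge0 | exact: K].
Qed.

Lemma gn_max_ge p : (forall z, 1 <= rho p z) ->
  1 <= Gmax p /\ (Gmax p = 1 <-> forall z, rho p z = 1).
Proof.
move=> H; have G1 : 1 <= Gmax p by apply: le_trans (H (z0 n)) (le_bigmax _ _ _).
split => //; split => [E z|K].
  apply/le_anti; rewrite H andbT -E; exact: le_bigmax.
apply/le_anti; rewrite G1 andbT; apply: bigmax_le => // z _.
by rewrite K.
Qed.

Lemma gn_max_le p : (forall z, rho p z <= 1) -> rho p (z0 n) = 1 -> Gmax p = 1.
Proof.
move=> H H0; apply/le_anti; rewrite -{2}H0 le_bigmax andbT.
by apply: bigmax_le.
Qed.
End Abs.

Unset Implicit Arguments.

Theorem mainTheorem11 (R : realType) (n : nat) (U : 'M[R[i]]_(2 ^ n)) :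
  unitary U ->
  (* (1) 0 < p < 2, 0 < q <= oo *)
  (forall (p : R) (q : \bar R), 0 < p < 2 -> (0 < q)%E ->
     1 <= groupnorm p q (repr_mat U) /\ (groupnorm p q (repr_mat U) = 1 <-> clifford U)) /\
  (* (2) p > 2, 0 < q < oo *)
  (forall (p q : R), 2 < p -> 0 < q ->
     groupnorm p q%:E (repr_mat U) <= 1 /\ (groupnorm p q%:E (repr_mat U) = 1 <-> clifford U)) /\
  (* (3a) p = 2, 0 < q <= oo *)
  (forall q : \bar R, (0 < q)%E -> groupnorm 2 q (repr_mat U) = 1) /\
  (* (3b) p > 2, q = oo *)
  (forall p : R, 2 < p -> groupnorm p +oo%E (repr_mat U) = 1).
Proof.
move=> HU.
have Hrow z : \sum_x cabs (repr_mat U z x) ^+ 2 = 1 by apply: row_norm_R.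
have Hr0 x : cabs (repr_mat U (z0 n) x) = 0 \/ cabs (repr_mat U (z0 n) x) = 1.
  by rewrite row0 //; case: (z0 n == x); [right; rewrite /cabs normr1 | left; rewrite cabs0].
have Hcl : clifford U <-> flatM (repr_mat U).
  by split; [apply: clifford_flat | apply: flat_clifford].
split.
  move=> p q /andP[p0 p2] q0.
  have rge z := rho_ge1 Hrow z p0 (ltW p2).
  have Hfl := rho_eq1 Hrow p0 (negbT (lt_eqF p2)).
  case: q q0 => [q||] //= q0.
    rewrite lte_fin in q0.
    have [G1 Geq] := gn_mean_ge (M := repr_mat U) q0 rge.
    by split; [exact: G1 | rewrite Hcl -Hfl; exact: Geq].
  have [G1 Geq] := gn_max_ge (M := repr_mat U) rge.
  by split; [exact: G1 | rewrite Hcl -Hfl; exact: Geq].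
split.
  move=> p q p2 q0; have p0 : 0 < p by apply: lt_trans p2.
  have rle z := rho_le1 Hrow z p0 (ltW p2).
  have Hfl := rho_eq1 Hrow p0 (negbT (gt_eqF p2)).
  have [G1 Geq] := gn_mean_le (M := repr_mat U) q0 rle.
  by split; [exact: G1 | rewrite Hcl -Hfl; exact: Geq].
split.
  have r2 := rho2 Hrow.
  case=> [q||] //= q0.
    rewrite lte_fin in q0.
    have [_ Geq] := gn_mean_ge (M := repr_mat U) (p := 2) q0 (fun z => ltac:(by rewrite r2)).
    by apply/Geq.
  have [_ Geq] := gn_max_ge (M := repr_mat U) (p := 2) (fun z => ltac:(by rewrite r2)).
  by apply/Geq.
move=> p p2; have p0 : 0 < p by apply: lt_trans p2.
apply: (gn_max_le (M := repr_mat U)).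
  by move=> z; exact: (rho_le1 Hrow z p0 (ltW p2)).
exact: (rho_z0 Hrow Hr0 p0).
Qed.
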